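(* Let $\mathcal{C}$ be a Conway category and $\mathbf{Q}$ a finite automaton. If the identity $\Gamma(\mathbf{Q})$ holds in $\mathcal{C}$, then so does the identity $\Gamma(M(\mathbf{Q}))$ associated with the monoid $M(\mathbf{Q})$.
   Context: Cartesian categories have chosen finite products (terminal object $T$, projections $\pi_i$, tupling $\langle\cdot\rangle$, $!_A:A\to T$, $f\times g$), strictly associative; composition is written $g\circ f$; $\Delta_{A^n}=\langle 1_A,\ldots,1_A\rangle:A\to A^n$. A dagger operation maps $f:A\times C\to A$ to $f^\dagger:C\to A$. A Conway category is a cartesian category with dagger satisfying: $(f\circ(1_A\times g))^\dagger=f^\dagger\circ g$ ($f:A\times B\to A$, $g:C\to B$); $f^{\dagger\dagger}=(f\circ(\Delta_{A^2}\times 1_C))^\dagger$ ($f:A\times A\times C\to A$); $(f\circ\langle g,\pi_2^{A\times C}\rangle)^\dagger=f\circ\langle (g\circ\langle f,\pi_2^{B\times C}\rangle)^\dagger,1_C\rangle$ ($f:B\times C\to A$, $g:A\times C\to B$). A finite automaton $\mathbf{Q}=(Q,Z,\cdot)$ has finite nonempty state set $Q$, finite nonempty input alphabet $Z$ and action $Q\times Z\to Q$, extended to words; $M(\mathbf{Q})$ is the monoid of functions $Q\to Q$, $q\mapsto qu$, induced by words $u\in Z^*$, with product $u^{\mathbf{Q}}\cdot v^{\mathbf{Q}}=(uv)^{\mathbf{Q}}$. Write $Q=\{q_1,\ldots,q_n\}$, identified with $\{1,\ldots,n\}$, and $Z=\{a_1,\ldots,a_m\}$. For an object $A$ and $i\in[n]$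 let $\rho_i^{\mathbf{Q},A}=\langle\pi^{A^n}_{ia_1},\ldots,\pi^{A^n}_{ia_m}\rangle:A^n\to A^m$ ($ia_j$ is the index of $q_i\cdot a_j$). For $f:A^m\times C\to A$ let $f^{\mathbf{Q},A}:A^n\times C\to A^n$ have components $\pi_i^{A^n}\circ f^{\mathbf{Q},A}=f\circ(\rho_i^{\mathbf{Q},A}\times 1_C)$. The identity $\Gamma(\mathbf{Q})$ holds in $\mathcal{C}$ if $(f^{\mathbf{Q},A})^\dagger=\Delta_{A^n}\circ(f\circ(\Delta_{A^m}\times 1_C))^\dagger$ for all objects $A,C$ and all $f:A^m\times C\to A$. For a finite monoid $M$, $\Gamma(M)$ denotes $\Gamma$ of the automaton $(M,M,\cdot)$ whose action is monoid multiplication. *)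

(* Defs.v *)
From mathcomp Require Import all_boot.
From mathcomp Require Import boolp.

Set Implicit Arguments.
Unset Strict Implicit.
Unset Printing Implicit Defensive.

Record CartCat := {
  obj : Type;
  hom : obj -> obj -> Type;
  idm : forall A, hom A A;
  comp : forall A B C, hom B C -> hom A B -> hom A C;
  comp_assoc : forall A B C D (h : hom C D) (g : hom B C) (f : hom A B),
      comp h (comp g f) = comp (comp h g) f;
  comp_id_l : forall A B (f : hom A B), comp (idm B) f = f;
  comp_id_r : forall A B (f : hom A B), comp f (idm A) = f;
  term : obj;
  bang : forall A, hom A term;
  bang_unique : forall A (f : hom A term), f = bang A;
  prod : obj -> obj -> obj;
  pi1 : forall A B, hom (prod A B) A;
  pi2 : forall A B, hom (prod A B) B;
  pair : forall C A B, hom C A -> hom C B -> hom C (prod A B);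
  pi1_pair : forall C A B (f : hom C A) (g : hom C B), comp (pi1 A B) (pair f g) = f;
  pi2_pair : forall C A B (f : hom C A) (g : hom C B), comp (pi2 A B) (pair f g) = g;
  pair_eta : forall C A B (h : hom C (prod A B)),
      pair (comp (pi1 A B) h) (comp (pi2 A B) h) = h
}.

Arguments idm {c} A.
Arguments comp {c A B C} g f.
Arguments bang {c} A.
Arguments term {c}.
Arguments prod {c} A B.
Arguments pi1 {c} A B.
Arguments pi2 {c} A B.
Arguments pair {c C A B} f g.

Section CartDefs.
Variable K : CartCat.

Definition pmor (A B A' B' : obj K) (f : hom A A') (g : hom B B') :
    hom (prod A B) (prod A' B') :=
  pair (comp f (pi1 A B)) (comp g (pi2 A B)).

(* Powers A^n := A x (A x (... x T)). Any choice of powers gives the same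
   identities since all notions involved are invariant under canonical iso. *)
Fixpoint pow (A : obj K) (n : nat) : obj K :=
  match n with 0 => term | n'.+1 => prod A (pow A n') end.

Lemma ord0_empty : 'I_0 -> False.
Proof. by case. Qed.

Fixpoint proj (A : obj K) (n : nat) : 'I_n -> hom (pow A n) A :=
  match n return 'I_n -> hom (pow A n) A with
  | 0 => fun i => False_rect _ (ord0_empty i)
  | n'.+1 => fun i =>
      match unlift ord0 i with
      | None => pi1 A (pow A n')
      | Some j => comp (@proj A n' j) (pi2 A (pow A n'))
      end
  end.

Fixpoint tup (A C : obj K) (n : nat) : ('I_n -> hom C A) -> hom C (pow A n) :=
  match n return ('I_n -> hom C A) -> hom C (pow A n) with
  | 0 => fun _ => bang C
  | n'.+1 => fun fs => pair (fs ord0) (@tup A C n' (fun j : 'I_n' => fs (lift ord0 j)))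
  end.

Definition diag (A : obj K) (n : nat) : hom A (pow A n) :=
  @tup A A n (fun _ : 'I_n => idm A).

Definition diag2 (A : obj K) : hom A (prod A A) := pair (idm A) (idm A).

(* canonical associativity map (A x B) x C -> A x (B x C); it is the identity
   in a strictly associative category *)
Definition assoc (A B C : obj K) : hom (prod (prod A B) C) (prod A (prod B C)) :=
  pair (comp (pi1 A B) (pi1 (prod A B) C))
       (pair (comp (pi2 A B) (pi1 (prod A B) C)) (pi2 (prod A B) C)).

End CartDefs.

Arguments pmor {K A B A' B'} f g.
Arguments proj {K A n} i.
Arguments tup {K A C n} fs.
Arguments diag {K} A n.
Arguments diag2 {K} A.
Arguments assoc {K} A B C.

Definition DaggerOp (K : CartCat) :=
  forall (A C : obj K), hom (prod A C) A -> hom C A.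

Record ConwayCat := {
  ccat :> CartCat;
  dagger : DaggerOp ccat;
  conway_param : forall (A B C : obj ccat) (f : hom (prod A B) A) (g : hom C B),
      dagger (comp f (pmor (idm A) g)) = comp (dagger f) g;
  conway_double : forall (A C : obj ccat) (f : hom (prod A (prod A C)) A),
      dagger (dagger f) =
      dagger (comp f (comp (assoc A A C) (pmor (diag2 A) (idm C))));
  conway_composition : forall (A B C : obj ccat)
      (f : hom (prod B C) A) (g : hom (prod A C) B),
      dagger (comp f (pair g (pi2 A C))) =
      comp f (pair (dagger (comp g (pair f (pi2 B C)))) (idm C))
}.

Arguments dagger {c A C} f.

Section Gamma.
Variable K : ConwayCat.
Variables (Q Z : finType) (act : Q -> Z -> Q).

Local Notation n := #|Q|.
Local Notation m := #|Z|.

Definition rho (A : obj K) (i : 'I_n) : hom (pow A n) (pow A m) :=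
  tup (fun j : 'I_m => proj (enum_rank (act (enum_val i) (enum_val j)))).

Definition fQ (A C : obj K) (f : hom (prod (pow A m) C) A) :
    hom (prod (pow A n) C) (pow A n) :=
  tup (fun i : 'I_n => comp f (pmor (rho A i) (idm C))).

Definition Gamma : Prop :=
  forall (A C : obj K) (f : hom (prod (pow A m) C) A),
    dagger (fQ f) = comp (diag A n) (dagger (comp f (pmor (diag A m) (idm C)))).

End Gamma.

Arguments Gamma K {Q Z} act.

Section Monoid.
Variables (Q Z : finType) (act : Q -> Z -> Q).

Definition actw (q : Q) (w : seq Z) : Q := foldl act q w.

Definition induced (f : {ffun Q -> Q}) : Prop :=
  exists w : seq Z, forall q, f q = actw q w.

Definition MQ := {f : {ffun Q -> Q} | `[< induced f >]}.

Lemma induced_mul (x y : MQ) :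
  `[< induced [ffun q => val y (val x q)] >].
Proof.
case: x => f Hf; case: y => g Hg /=.
move/asboolP: Hf => [u Hu]; move/asboolP: Hg => [v Hv].
apply/asboolP; exists (u ++ v) => q.
by rewrite ffunE /actw foldl_cat Hu Hv.
Qed.

(* u^Q . v^Q = (uv)^Q : first apply u, then v *)
Definition mulM (x y : MQ) : MQ := exist (fun f => `[< induced f >]) _ (induced_mul x y).

End Monoid.

(* Main.v *)
Require Import Defs.
From mathcomp Require Import all_boot.
From mathcomp Require Import boolp.
Require Import Defs.
Set Implicit Arguments. Unset Strict Implicit. Unset Printing Implicit Defensive.


Section Cart.
Variable K : CartCat.
Implicit Types A B C D X Y : obj K.

Lemma pair_ext C A B (h1 h2 : hom C (prod A B)) :
  comp (pi1 A B) h1 = comp (pi1 A B) h2 -> comp (pi2 A B) h1 = comp (pi2 A B) h2 -> h1 = h2.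
Proof. by move=> e1 e2; rewrite -(pair_eta h1) -(pair_eta h2) e1 e2. Qed.

Lemma comp_pair C D A B (f : hom C A) (g : hom C B) (h : hom D C) :
  comp (pair f g) h = pair (comp f h) (comp g h).
Proof. by apply: pair_ext; rewrite ?pi1_pair ?pi2_pair comp_assoc ?pi1_pair ?pi2_pair. Qed.

Lemma pair_pi A B : pair (pi1 A B) (pi2 A B) = idm (prod A B).
Proof. by apply: pair_ext; rewrite ?pi1_pair ?pi2_pair comp_id_r. Qed.

Lemma pmor_pair C A B A' B' (f : hom A A') (g : hom B B') (h : hom C A) (k : hom C B) :
  comp (pmor f g) (pair h k) = pair (comp f h) (comp g k).
Proof. by rewrite /pmor comp_pair -!comp_assoc pi1_pair pi2_pair. Qed.

Lemma pmor_comp A B A' B' A'' B'' (f : hom A A') (g : hom B B') (f' : hom A' A'') (g' : hom B' B'') :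
  comp (pmor f' g') (pmor f g) = pmor (comp f' f) (comp g' g).
Proof. by rewrite {2}/pmor pmor_pair !comp_assoc. Qed.

Lemma pmor_id A B : pmor (idm A) (idm B) = idm (prod A B).
Proof. by rewrite /pmor !comp_id_l pair_pi. Qed.

Lemma proj_tup A C n (fs : 'I_n -> hom C A) (j : 'I_n) : comp (proj j) (tup fs) = fs j.
Proof.
elim: n fs j => [|n IH] fs j; first by case: j.
rewrite /=; case: unliftP => [j' ->|->]; first by rewrite -comp_assoc pi2_pair IH.
by rewrite pi1_pair.
Qed.

Lemma tup_ext A C n (h1 h2 : hom C (pow A n)) :
  (forall j, comp (proj j) h1 = comp (proj j) h2) -> h1 = h2.
Proof.
elim: n h1 h2 => [|n IH] h1 h2 H.
  by rewrite (bang_unique h1) (bang_unique h2).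
apply: pair_ext.
  by have := H ord0; rewrite /= unlift_none.
apply: IH => j; have := H (lift ord0 j); rewrite /= liftK -!comp_assoc //.
Qed.

Lemma tup_comp A C D n (fs : 'I_n -> hom C A) (h : hom D C) :
  comp (tup fs) h = tup (fun j => comp (fs j) h).
Proof. by apply: tup_ext => j; rewrite comp_assoc !proj_tup. Qed.

Definition pw A (I : finType) := pow A #|I|.
Definition prj A (I : finType) (i : I) : hom (pw A I) A := proj (enum_rank i).
Definition tp A C (I : finType) (fs : I -> hom C A) : hom C (pw A I) :=
  tup (fun j => fs (enum_val j)).
Arguments prj {A I} i.
Arguments tp {A C I} fs.

Lemma prj_tp A C (I : finType) (fs : I -> hom C A) i : comp (prj i) (tp fs) = fs i.
Proof. by rewrite /prj /tp proj_tup enum_rankK. Qed.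

Lemma pw_ext A C (I : finType) (h1 h2 : hom C (pw A I)) :
  (forall i : I, comp (prj i) h1 = comp (prj i) h2) -> h1 = h2.
Proof. by move=> H; apply: tup_ext => j; have := H (enum_val j); rewrite /prj enum_valK. Qed.

Lemma tp_comp A C D (I : finType) (fs : I -> hom C A) (h : hom D C) :
  comp (tp fs) h = tp (fun i => comp (fs i) h).
Proof. by apply: pw_ext => i; rewrite comp_assoc !prj_tp. Qed.

Lemma tp_ext A C (I : finType) (fs gs : I -> hom C A) : (forall i, fs i = gs i) -> tp fs = tp gs.
Proof. by move=> H; apply: pw_ext => i; rewrite !prj_tp. Qed.

Lemma tp_eta A C (I : finType) (h : hom C (pw A I)) : tp (fun i => comp (prj i) h) = h.
Proof. by apply: pw_ext => i; rewrite prj_tp. Qed.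

Lemma prj_diag A (I : finType) (i : I) : comp (prj i) (diag A #|I|) = idm A.
Proof. by rewrite /prj /diag proj_tup. Qed.

End Cart.
Arguments pw {K} A I.
Arguments prj {K A I} i.
Arguments tp {K A C I} fs.


Ltac norm := rewrite /pmor; repeat progress (rewrite -?comp_assoc ?comp_pair ?pi1_pair ?pi2_pair ?comp_id_l ?comp_id_r ?prj_tp ?tp_comp ?pair_pi).

Section Conway.
Variable K : ConwayCat.
Implicit Types A B C D X Y : obj K.

Lemma dag_fix A C (f : hom (prod A C) A) : dagger f = comp f (pair (dagger f) (idm C)).
Proof.
have := conway_composition f (pi1 A C).
by rewrite pair_pi comp_id_r pi1_pair.
Qed.

Lemma dag_const A C (h : hom C A) : dagger (comp h (pi2 A C)) = h.
Proof. by rewrite dag_fix -comp_assoc pi2_pair comp_id_r. Qed.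

Lemma assoc_diag A C :
  comp (assoc A A C) (pmor (diag2 A) (idm C)) = pair (pi1 A C) (idm (prod A C)).
Proof.
rewrite /assoc /diag2; norm.
done.
Qed.

Lemma dag_double A C (f : hom (prod A (prod A C)) A) :
  dagger (comp f (pair (pi1 A C) (idm (prod A C)))) = dagger (dagger f).
Proof. by rewrite conway_double assoc_diag. Qed.

Lemma dag_conj X X' C (i : hom X X') (i' : hom X' X) (G : hom (prod X' C) X') :
  comp i i' = idm X' ->
  dagger (comp i' (comp G (pmor i (idm C)))) = comp i' (dagger G).
Proof.
move=> ii.
have := conway_composition (comp i' (pi1 X' C)) (comp G (pmor i (idm C))).
have -> : comp (comp i' (pi1 X' C)) (pair (comp G (pmor i (idm C))) (pi2 X C)) =
          comp i' (comp G (pmor i (idm C))).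
  by norm.
move=> ->.
have -> : comp (comp G (pmor i (idm C))) (pair (comp i' (pi1 X' C)) (pi2 X' C)) = G.
  norm; rewrite comp_assoc ii comp_id_l pair_pi comp_id_r //.
by norm.
Qed.

Section AL.
Variables (X Y C : obj K) (pr : hom X Y) (gl : hom (prod Y X) X) (t : hom Y X).
Hypothesis prgl : comp pr gl = pi1 Y X.
Let w := comp gl (pair (idm Y) t).

Lemma dag_AL (G : hom (prod X C) X) :
  G = comp gl (pair (comp pr G) (comp t (comp pr (pi1 X C)))) ->
  dagger G = comp w (dagger (comp pr (comp G (pmor w (idm C))))).
Proof.
move=> HG.
pose P := prod X C.
pose Phi := comp gl (pair (comp pr (comp G (pi2 X P))) (comp t (comp pr (pi1 X P)))).
have E1 : comp Phi (pair (pi1 X C) (idm P)) = G.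
  by rewrite HG /Phi; norm.
rewrite -{1}E1 dag_double.
pose f1 := comp gl (pair (comp pr (comp G (pi2 Y P))) (comp t (pi1 Y P))).
pose g1 := comp pr (pi1 X P).
have E2 : comp f1 (pair g1 (pi2 X P)) = Phi by rewrite /f1 /g1 /Phi; norm.
have := conway_composition f1 g1; rewrite E2 => ->.
have E3 : comp g1 (pair f1 (pi2 Y P)) = comp (comp pr G) (pi2 Y P).
  rewrite /g1 /f1; norm; rewrite comp_assoc prgl; norm; done.
rewrite E3 dag_const.
have E4 : comp f1 (pair (comp pr G) (idm P)) = comp w (comp pr G).
  rewrite /f1 /w; norm; done.
rewrite E4.
have := conway_composition (comp w (pi1 Y C)) (comp pr G).
have -> : comp (comp w (pi1 Y C)) (pair (comp pr G) (pi2 X C)) = comp w (comp pr G) by norm.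
move=> ->; norm; done.
Qed.
End AL.

Section SL.
Variables (X Y C : obj K) (pr : hom X Y) (gl : hom (prod Y X) X).
Hypothesis prgl : comp pr gl = pi1 Y X.
Hypothesis glpr : comp gl (pair pr (idm X)) = idm X.

Lemma dag_SL (G : hom (prod X C) X) (F : hom (prod Y C) Y) :
  comp pr G = comp F (pmor pr (idm C)) -> comp pr (dagger G) = dagger F.
Proof.
move=> HG.
pose P := prod X C.
pose Phi := comp gl (pair (comp F (pair (comp pr (pi1 X P)) (comp (pi2 X C) (pi2 X P))))
                          (comp G (pi2 X P))).
have E1 : comp Phi (pair (pi1 X C) (idm P)) = G.
  have -> : comp Phi (pair (pi1 X C) (idm P)) = comp gl (pair (comp pr G) G).
    by rewrite /Phi HG; norm.
  by rewrite -[in RHS](comp_id_l G) -glpr -comp_assoc comp_pair comp_id_l.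
rewrite -{1}E1 dag_double.
pose f1 := comp gl (pair (comp F (pair (pi1 Y P) (comp (pi2 X C) (pi2 Y P)))) (comp G (pi2 Y P))).
pose g1 := comp pr (pi1 X P).
have E2 : comp f1 (pair g1 (pi2 X P)) = Phi by rewrite /f1 /g1 /Phi; norm.
have := conway_composition f1 g1; rewrite E2 => ->.
have E3 : comp g1 (pair f1 (pi2 Y P)) = comp F (pmor (idm Y) (pi2 X C)).
  rewrite /g1 /f1; norm; rewrite comp_assoc prgl; norm; done.
rewrite E3 conway_param.
set D := comp f1 _.
rewrite dag_fix /D /f1; norm; rewrite comp_assoc prgl; norm.
by rewrite [in RHS]dag_fix.
Qed.
End SL.
End Conway.


Section Auto.
Variable K : ConwayCat.
Implicit Types A B C D X Y : obj K.

Definition rhoP (Q Z : finType) (act : Q -> Z -> Q) A (q : Q) : hom (pw A Q) (pw A Z) :=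
  tp (fun z => prj (act q z)).

Lemma prj_fQ (Q Z : finType) (act : Q -> Z -> Q) A C (f : hom (prod (pw A Z) C) A) (q : Q) :
  comp (prj q) (fQ act f) = comp f (pmor (rhoP act A q) (idm C)).
Proof. by rewrite /prj /fQ proj_tup /rho enum_rankK. Qed.

Lemma GammaE (Q Z : finType) (act : Q -> Z -> Q) :
  Gamma K act <-> forall A C (f : hom (prod (pw A Z) C) A),
    dagger (fQ act f) = comp (tp (fun _ : Q => idm A))
        (dagger (comp f (pmor (tp (fun _ : Z => idm A)) (idm C)))).
Proof. by []. Qed.

Lemma Gamma_ren (Q Z W : finType) (act : Q -> Z -> Q) (act' : Q -> W -> Q) (phi : W -> Z) :
  (forall q w, act' q w = act q (phi w)) -> Gamma K act -> Gamma K act'.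
Proof.
move=> H /GammaE G; apply/GammaE => A C f.
pose f' := comp f (pmor (tp (fun w => prj (phi w)) : hom (pw A Z) (pw A W)) (idm C)).
have E : fQ act' f = fQ act f'.
  apply: pw_ext => q; rewrite !prj_fQ /f' -comp_assoc pmor_comp comp_id_l.
  congr (comp f (pmor _ _)); apply: pw_ext => w; rewrite /rhoP; norm; by rewrite H.
rewrite E G /f' -comp_assoc pmor_comp comp_id_l.
congr (comp _ (dagger (comp f (pmor _ _)))); apply: pw_ext => w; norm; done.
Qed.

Lemma Gamma_single (P V : finType) (aP : P -> V -> P) (p0 : P) :
  (forall p, p = p0) -> Gamma K aP.
Proof.
move=> Hp; apply/GammaE => A C f.
set F := comp f _.
have E : fQ aP f = comp (tp (fun _ : P => idm A)) (comp F (pmor (prj p0) (idm C))).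
  apply: pw_ext => p; rewrite prj_fQ /F (comp_assoc (prj p)) prj_tp comp_id_l -comp_assoc pmor_comp comp_id_l.
  congr (comp f (pmor _ _)); apply: pw_ext => v; rewrite /rhoP; norm; by rewrite (Hp (aP p v)) -(Hp p).
by rewrite E dag_conj // prj_tp.
Qed.

Lemma Gamma_prod (Q1 Q2 P V : finType) (a1 : Q1 -> V -> Q1) (a2 : Q2 -> V -> Q2)
   (aP : P -> V -> P) (e : P -> Q1 * Q2) (d : Q1 * Q2 -> P) :
  cancel e d -> cancel d e ->
  (forall p v, e (aP p v) = (a1 (e p).1 v, a2 (e p).2 v)) ->
  Gamma K a1 -> Gamma K a2 -> Gamma K aP.
Proof.
move=> ed de He /GammaE G1 /GammaE G2; apply/GammaE => A C f.
pose B := pw A Q2.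
pose g : hom (prod (pw B V) C) B :=
  tp (fun q2 => comp f (pmor (tp (fun v => comp (prj (a2 q2 v)) (prj v))) (idm C))).
pose i : hom (pw A P) (pw B Q1) := tp (fun q1 => tp (fun q2 => prj (d (q1, q2)))).
pose i' : hom (pw B Q1) (pw A P) := tp (fun p => comp (prj (e p).2) (prj (e p).1)).
have ii : comp i i' = idm _.
  apply: pw_ext => q1; apply: pw_ext => q2; rewrite comp_id_r /i /i'; norm.
  by rewrite de.
have E : fQ aP f = comp i' (comp (fQ a1 g) (pmor i (idm C))).
  apply: pw_ext => p; rewrite prj_fQ /i'; norm.
  rewrite (comp_assoc (prj (e p).1)) prj_fQ /g /rhoP; norm.
  congr (comp f (pair _ _)); apply: pw_ext => v; norm.
  by rewrite -He ed.
rewrite E dag_conj // G1.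
have E2 : comp g (pmor (tp (fun _ : V => idm B)) (idm C)) = fQ a2 f.
  apply: pw_ext => q2; rewrite prj_fQ /g /rhoP; norm.
  congr (comp f (pair _ _)); apply: pw_ext => v; norm; done.
rewrite E2 G2 !comp_assoc; congr (comp _ _).
apply: pw_ext => p; rewrite /i'; norm; done.
Qed.

Definition actF (Q V : finType) (act : Q -> V -> Q) (I : finType) (phi : {ffun I -> Q}) (v : V) :
  {ffun I -> Q} := [ffun i => act (phi i) v].

Lemma Gamma_pow (Q V : finType) (act : Q -> V -> Q) j :
  Gamma K act -> Gamma K (@actF Q V act 'I_j).
Proof.
move=> G; elim: j => [|j IH].
  apply: (@Gamma_single _ _ _ [ffun i => False_rect _ (ord0_empty i)]).
  by move=> p; apply/ffunP => -[].
pose e (phi : {ffun 'I_j.+1 -> Q}) := (phi ord0, [ffun i => phi (lift ord0 i)]).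
pose d (x : Q * {ffun 'I_j -> Q}) : {ffun 'I_j.+1 -> Q} :=
  [ffun i => match unlift ord0 i with None => x.1 | Some i' => x.2 i' end].
apply: (@Gamma_prod _ _ _ _ act (@actF Q V act 'I_j) _ e d) => //.
- move=> phi; apply/ffunP => i; rewrite /d /e ffunE /=.
  by case: unliftP => [i' ->|->] //; rewrite ffunE.
- move=> [q psi]; rewrite /d /e /= ffunE unlift_none; congr (_, _).
  by apply/ffunP => i; rewrite !ffunE liftK.
- by move=> phi v; rewrite /e /actF /= !ffunE; congr (_, _); apply/ffunP => i; rewrite !ffunE.
Qed.

Lemma Gamma_sub (S P V : finType) (aS : S -> V -> S) (aP : P -> V -> P) (e : S -> P) :
  injective e -> (forall s v, e (aS s v) = aP (e s) v) -> Gamma K aP -> Gamma K aS.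
Proof.
move=> einj He /GammaE G; apply/GammaE => A C f.
pose pr : hom (pw A P) (pw A S) := tp (fun s => prj (e s)).
pose gl : hom (prod (pw A S) (pw A P)) (pw A P) :=
  tp (fun p => match [pick s | e s == p] with
               | Some s => comp (prj s) (pi1 _ _) | None => comp (prj p) (pi2 _ _) end).
have prgl : comp pr gl = pi1 _ _.
  apply: pw_ext => s; rewrite /pr /gl; norm.
  case: pickP => [s' /eqP /einj -> | /(_ s)]; first by norm.
  by rewrite eqxx.
have glpr : comp gl (pair pr (idm _)) = idm _.
  apply: pw_ext => p; rewrite /pr /gl comp_id_r; norm.
  by case: pickP => [s' /eqP <- | _]; norm.
have H : comp pr (fQ aP f) = comp (fQ aS f) (pmor pr (idm C)).
  apply: pw_ext => s; rewrite /pr (comp_assoc (prj s)) prj_tp prj_fQ (comp_assoc (prj s)) prj_fQ.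
  rewrite -comp_assoc pmor_comp comp_id_l; congr (comp f (pmor _ _)).
  apply: pw_ext => v; rewrite /rhoP; norm; by rewrite He.
rewrite -(dag_SL prgl glpr H) G comp_assoc; congr (comp _ _).
apply: pw_ext => s; rewrite /pr; norm; done.
Qed.
End Auto.


Definition act_opt (Q Z : finType) (act : Q -> Z -> Q) (q : Q) (o : option Z) : Q :=
  if o is Some z then act q z else q.

Section Auto2.
Variable K : ConwayCat.

Lemma Gamma_opt (Q Z : finType) (act : Q -> Z -> Q) :
  Gamma K act -> Gamma K (act_opt act).
Proof.
move=> /GammaE G; apply/GammaE => A C f.
pose X := pw A Q.
pose Phi : hom (prod X (prod X C)) X := tp (fun q => comp f (pair (tp (fun o : option Z =>
   match o with None => comp (prj q) (pi1 X (prod X C))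
   | Some z => comp (prj (act q z)) (comp (pi1 X C) (pi2 X (prod X C))) end))
   (comp (pi2 X C) (pi2 X (prod X C))))).
have E1 : comp Phi (pair (pi1 X C) (idm _)) = fQ (act_opt act) f.
  apply: pw_ext => q; rewrite prj_fQ /rhoP /Phi; norm.
  congr (comp f (pair _ _)); apply: pw_ext => o; norm; case: o => [z|]; norm; done.
pose fh : hom (prod A (prod (pw A Z) C)) A := comp f (pair (tp (fun o : option Z =>
   match o with None => pi1 A (prod (pw A Z) C)
   | Some z => comp (prj z) (comp (pi1 (pw A Z) C) (pi2 A _)) end))
   (comp (pi2 (pw A Z) C) (pi2 A _))).
have E2 : dagger Phi = fQ act (dagger fh).
  apply: pw_ext => q; rewrite prj_fQ -conway_param.
  pose gl : hom (prod A X) X := tp (fun q' => if q' == q then pi1 A X else comp (prj q') (pi2 A X)).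
  have prgl : comp (prj q) gl = pi1 A X by rewrite /gl prj_tp eqxx.
  have glpr : comp gl (pair (prj q) (idm X)) = idm X.
    apply: pw_ext => q'; rewrite /gl comp_id_r; norm; case: eqP => [->|_]; norm; done.
  apply: (dag_SL prgl glpr).
  rewrite /Phi /fh /rhoP; norm.
  congr (comp f (pair _ _)); apply: pw_ext => o; norm; case: o => [z|]; norm; done.
rewrite -E1 dag_double E2 G -conway_param -dag_double.
congr (comp _ (dagger _)); rewrite /fh; norm.
congr (comp f (pair _ _)); apply: pw_ext => o; norm; case: o => [z|]; norm; done.
Qed.

Definition actPair (Q V Z : finType) (act : Q -> Z -> Q) (aV : Q -> V -> Q)
  (q : Q) (vo : V * option Z) : Q := act_opt act (aV q vo.1) vo.2.

Lemma Gamma_pair (Q V Z : finType) (act : Q -> Z -> Q) (aV : Q -> V -> Q) (iota : option Z -> V) :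
  (forall q o, aV q (iota o) = act_opt act q o) -> Gamma K aV ->
  Gamma K (actPair act aV).
Proof.
move=> Hi /GammaE G; apply/GammaE => A C f.
pose B := pw A (option Z).
pose X := pw B Q.
pose Y := pw A Q.
pose g : hom (prod (pw B V) C) B := tp (fun o : option Z => match o with
   | None => comp f (pair (tp (fun vo : V * option Z =>
                 comp (prj vo.2) (comp (prj vo.1) (pi1 (pw B V) C)))) (pi2 (pw B V) C))
   | Some z => comp (prj None) (comp (prj (iota (Some z))) (pi1 (pw B V) C)) end).
pose pr : hom X Y := tp (fun q => comp (prj None) (prj q)).
pose gl : hom (prod Y X) X := tp (fun q => tp (fun o : option Z => match o with
   | None => comp (prj q) (pi1 Y X)
   | Some z => comp (prj (Some z)) (comp (prj q) (pi2 Y X)) end)).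
pose t : hom Y X := tp (fun q => tp (fun o : option Z => prj (act_opt act q o))).
have prgl : comp pr gl = pi1 Y X.
  apply: pw_ext => q; rewrite /pr /gl; norm; done.
have wt : comp gl (pair (idm Y) t) = t.
  apply: pw_ext => q; apply: pw_ext => o; rewrite /gl /t; norm; case: o => [z|]; norm; done.
have HG : fQ aV g = comp gl (pair (comp pr (fQ aV g)) (comp t (comp pr (pi1 X C)))).
  apply: pw_ext => q; apply: pw_ext => o; rewrite /gl; norm; case: o => [z|]; norm => //.
  rewrite /t /pr; norm; rewrite prj_fQ /g /rhoP; norm.
  by rewrite Hi.
have := dag_AL prgl HG; rewrite wt => HD.
have E : comp pr (comp (fQ aV g) (pmor t (idm C))) = fQ (actPair act aV) f.
  apply: pw_ext => q; rewrite prj_fQ /pr; norm; rewrite (comp_assoc (prj q)) prj_fQ /g /rhoP; norm.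
  congr (comp f (pair _ _)); apply: pw_ext => vo; rewrite /t; norm; done.
have prt : comp pr t = idm Y.
  apply: pw_ext => q; rewrite /pr /t comp_id_r; norm; done.
have -> : dagger (fQ (actPair act aV) f) = comp pr (dagger (fQ aV g)).
  by rewrite HD comp_assoc prt comp_id_l E.
rewrite G.
pose gl' : hom (prod A B) B := tp (fun o : option Z => match o with
   | None => pi1 A B | Some z => comp (prj (Some z)) (pi2 A B) end).
pose t' : hom A B := tp (fun _ : option Z => idm A).
have prgl' : comp (prj None) gl' = pi1 A B by rewrite /gl' prj_tp.
have wt' : comp gl' (pair (idm A) t') = t'.
  apply: pw_ext => o; rewrite /gl' /t'; norm; case: o => [z|]; norm; done.
set g1 := comp g (pmor _ (idm C)).
have HG' : g1 = comp gl' (pair (comp (prj None) g1) (comp t' (comp (prj None) (pi1 B C)))).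
  apply: pw_ext => o; rewrite /gl' /g1; norm; case: o => [z|]; norm => //.
have := dag_AL prgl' HG'; rewrite wt' => ->.
have E' : comp (prj None) (comp g1 (pmor t' (idm C))) =
          comp f (pmor (tp (fun _ : V * option Z => idm A)) (idm C)).
  rewrite /g1 /g /t'; norm.
  congr (comp f (pair _ _)); apply: pw_ext => vo; norm; done.
rewrite E' !comp_assoc; congr (comp _ _).
apply: pw_ext => q; rewrite /pr /t'; norm; done.
Qed.

End Auto2.


Section Tower.
Variables (Q Z : finType) (act : Q -> Z -> Q).

Fixpoint Vt (k : nat) : finType :=
  match k with 0 => option Z | k'.+1 => ((Vt k' * option Z)%type : finType) end.

Fixpoint actV (k : nat) : Q -> Vt k -> Q :=
  match k with 0 => act_opt act | k'.+1 => actPair act (@actV k') end.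

Fixpoint iotaV (k : nat) : option Z -> Vt k :=
  match k with 0 => id | k'.+1 => fun o => (iotaV k' o, None) end.

Lemma actV_iota k q o : actV q (iotaV k o) = act_opt act q o.
Proof. by elim: k => //= k IH; rewrite /actPair /= IH. Qed.

Lemma Gamma_tower (K : ConwayCat) k : Gamma K act -> Gamma K (@actV k).
Proof.
move=> G; elim: k => [|k IH] /=; first exact: Gamma_opt.
by apply: (Gamma_pair (iota := @iotaV k)) => // q o; rewrite actV_iota.
Qed.

Lemma rep k (w : seq Z) : size w <= k.+1 -> exists v : Vt k, forall q, actV q v = actw act q w.
Proof.
elim: k w => [|k IH] w.
  case: w => [|z [|? ?]] //= _; first by exists None.
  by exists (Some z).
case/lastP: w => [|w' z] Hs.
  have [v Hv] := IH [::] isT; exists (v, None) => q; by rewrite /= /actPair /= Hv.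
have Hs' : size w' <= k.+1 by move: Hs; rewrite size_rcons.
have [v Hv] := IH w' Hs'.
exists (v, Some z) => q; by rewrite /= /actPair /= Hv /actw foldl_rcons.
Qed.
End Tower.

Theorem proposition4p2 (K : ConwayCat) (Q Z : finType) (act : Q -> Z -> Q) :
  0 < #|Q| -> 0 < #|Z| ->
  Gamma K act -> Gamma K (@mulM Q Z act).
Proof.
move=> _ _ G.
have [k Hk] : exists k, forall t : MQ act, exists w : seq Z,
    size w <= k.+1 /\ forall q, val t q = actw act q w.
  suff : forall s : seq (MQ act), exists k, forall t, t \in s -> exists w : seq Z,
    size w <= k.+1 /\ forall q, val t q = actw act q w.
    by case/(_ (enum (predT : pred (MQ act)))) => k Hk; exists k => t; apply: Hk; rewrite mem_enum.
  elim => [|t s [k IH]]; first by exists 0.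
  have [w Hw] : induced act (val t) by apply/asboolP; exact: (valP t).
  exists (maxn k (size w)) => t'; rewrite in_cons => /orP [/eqP -> | /IH [w' [H1 H2]]].
    by exists w; split; [apply: leq_trans (leq_maxr k (size w)) (leqnSn _) | exact: Hw].
  exists w'; split => //; apply: leq_trans H1 _; by rewrite ltnS leq_maxl.
have Hv : forall t : MQ act, exists v : Vt Z k, forall q, actV act q v = val t q.
  move=> t; have [w [Hs Hw]] := Hk t; have [v Hv] := rep act Hs.
  by exists v => q; rewrite Hv Hw.
have [phi Hphi] := choice Hv.
have G1 : Gamma K (fun q (t : MQ act) => val t q).
  apply: (@Gamma_ren K Q (Vt Z k) (MQ act) (@actV Q Z act k) (fun q t => val t q) phi) => [q t|]; first by rewrite Hphi.
  exact: Gamma_tower.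
have G2 := Gamma_pow #|Q| G1.
pose e (s : MQ act) : {ffun 'I_#|Q| -> Q} := [ffun i => val s (enum_val i)].
apply: (Gamma_sub (e := e) _ _ G2).
  move=> s s' H; apply/val_inj/ffunP => q.
  by have := congr1 (fun F : {ffun 'I_#|Q| -> Q} => F (enum_rank q)) H; rewrite /e !ffunE enum_rankK.
by move=> s t; apply/ffunP => i; rewrite /e /actF !ffunE.
Qed.
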